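(* Assume that $\Phi \in C^1(B_{r_0},\mathbf{R})$ satisfies the hypotheses described in the context (so that the abstract critical-point result recalled there applies) and furthermore that for all $n \geq 2$ and all $v \in V$ for which $G(\mathcal{L}_n v) > 0$, \[ G(\mathcal{L}_n v) < n^{q+1} G(v). \] Then there is a constant $C_9 \leq C_0$ depending only on $G$ such that, provided $\alpha/m \leq C_9$ and $(\mu/m)^{1/(q-1)} \leq C_0 r_0$, the critical point $v$ of $\Phi$ given by the abstract result recalled in the context has minimal period (with respect to $t$) equal to $2\pi$.
   Context: Let $\Omega := \mathbf{R}/2\pi\mathbf{Z} \times (0,\pi)$ and let $V$ be the Hilbert space of functions $v(t,x) = \eta(t+x) - \eta(t-x)$ with $\eta \in H^1(\mathbf{R}/2\pi\mathbf{Z})$ odd (equivalently $v = \sum_{j\ge1}\xi_j \cos(jt)\sin(jx)$ with $\sum j^2\xi_j^2<\infty$), endowed with the $H^1$ norm $\|v\|^2 = \int_\Omega v_t^2 + v_x^2$. For $n \in \mathbf{N}$ and $v(t,x)=\eta(t+x)-\eta(t-x)\in V$ set $(\mathcal{L}_n v)(t,x) := \eta(n(t+x)) - \eta(n(t-x))$. Let $B_{r_0} = \{v \in V : \|v\| < r_0\}$, $S$ the unit sphere of $V$, and consider $\Phi(v) = \frac{\mu}{2}\|v\|^2 - G(v) + R(v)$ on $B_{r_0}$, where $\mu > 0$ and: (H1) $G \in C^1(V,\mathbf{R})$ is positively homogeneous of degree $q+1$ with $q>1$ and $DG: V \to V^*$ is compact; (H2) $R \in C^1(B_{r_0},\mathbf{R})$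 and $DR: B_{r_0} \to V^*$ is compact; (H3) $R(0)=0$ and there is $\alpha>0$ with $|DR(v)[v]| \leq \alpha \|v\|^{q+1}$ for all $v \in B_{r_0}$. Assume $m := \sup_{v \neq 0} G(v)/\|v\|^{q+1} > 0$, and let $K_0 := \{v \in S : G(v) = m\}$ (nonempty and compact). The abstract result used is: there is a small constant $C_0>0$ depending only on $q$ such that if $\alpha/m \leq C_0$ and $(\mu/m)^{1/(q-1)} \leq C_0 r_0$, then $\Phi$ has a critical point $v \in B_{r_0}$ at level $c = \frac{q-1}{2} m \big(\frac{\mu}{(q+1)m}\big)^{\frac{q+1}{q-1}}[1 + O(\alpha/m)]$, and moreover $v = \big(\frac{\mu}{m(q+1)}\big)^{1/(q-1)} y$ with $\mathrm{dist}(y, K_0) \leq h(\alpha/m)$ for some function $h$ depending only on $G$ with $\lim_{s\to0}h(s)=0$. *)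

(* Defs.v *)
From Stdlib Require Import Reals.
From Coquelicot Require Import Coquelicot.
Open Scope R_scope.

(** The space V is represented through the Fourier coefficients of
    v(t,x) = sum_{j>=1} xi_j cos(j t) sin(j x)  (equivalent description given
    in the context).  A coefficient sequence is a map nat -> R; index 0 is
    unused and required to be 0. *)
Definition seqV := nat -> R.

Definition inV (v : seqV) : Prop :=
  v 0%nat = 0 /\ ex_series (fun j => (INR j * v j) ^ 2).

(** ||v||^2 = int_Omega v_t^2 + v_x^2 = pi^2 * sum_j j^2 xi_j^2 *)
Definition Vnorm (v : seqV) : R :=
  sqrt (PI ^ 2 * Series (fun j => (INR j * v j) ^ 2)).

(** the associated inner product  int_Omega u_t w_t + u_x w_x *)
Definition Vinner (u w : seqV) : R :=
  PI ^ 2 * Series (fun j => INR j ^ 2 * u j * w j).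

Definition vadd (u w : seqV) : seqV := fun j => u j + w j.
Definition vsub (u w : seqV) : seqV := fun j => u j - w j.
Definition vscal (a : R) (u : seqV) : seqV := fun j => a * u j.
Definition vzero : seqV := fun _ => 0.

Definition vfun (v : seqV) (t x : R) : R :=
  Series (fun j => v j * cos (INR j * t) * sin (INR j * x)).

(** real power x^y, with the convention 0^y = 0 (used for y > 0) *)
Definition powr (x y : R) : R := if Rle_dec x 0 then 0 else Rpower x y.

(** L_n : eta(s) |-> eta(n s).  If eta(s) = sum a_j sin(j s) then
    (L_n v) has coefficient xi_j at index n*j and 0 at indices not
    divisible by n. *)
Definition Lop (n : nat) (v : seqV) : seqV :=
  fun k => if Nat.eqb (Nat.modulo k n) 0 then v (Nat.div k n) else 0.

Definition Vball (r0 : R) (v : seqV) : Prop := inV v /\ Vnorm v < r0.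

Definition is_dual (l : seqV -> R) : Prop :=
  (forall u w a b, inV u -> inV w ->
      l (vadd (vscal a u) (vscal b w)) = a * l u + b * l w) /\
  exists C, forall u, inV u -> Rabs (l u) <= C * Vnorm u.

Definition dual_close (l1 l2 : seqV -> R) (eps : R) : Prop :=
  forall u, inV u -> Rabs (l1 u - l2 u) <= eps * Vnorm u.

Definition is_frechet_on (U : seqV -> Prop) (F : seqV -> R)
    (DF : seqV -> seqV -> R) : Prop :=
  forall v, U v -> is_dual (DF v) /\
    forall eps, 0 < eps -> exists delta, 0 < delta /\
      forall h, inV h -> Vnorm h < delta -> U (vadd v h) ->
        Rabs (F (vadd v h) - F v - DF v h) <= eps * Vnorm h.

Definition dual_continuous_on (U : seqV -> Prop) (DF : seqV -> seqV -> R) : Prop :=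
  forall v, U v -> forall eps, 0 < eps -> exists delta, 0 < delta /\
    forall w, U w -> Vnorm (vsub w v) < delta -> dual_close (DF w) (DF v) eps.

Definition C1_on (U : seqV -> Prop) (F : seqV -> R) (DF : seqV -> seqV -> R) : Prop :=
  is_frechet_on U F DF /\ dual_continuous_on U DF.

(** DF : U -> V_dual is compact: images of bounded sets are relatively compact
    in V_dual (sequential form: every bounded sequence has a subsequence whose
    images converge in V_dual) *)
Definition compact_dual_map (U : seqV -> Prop) (DF : seqV -> seqV -> R) : Prop :=
  forall (vs : nat -> seqV) (M : R),
    (forall k, U (vs k)) -> (forall k, Vnorm (vs k) <= M) ->
    exists (phi : nat -> nat) (l : seqV -> R),
      (forall k, (phi k < phi (S k))%nat) /\ is_dual l /\
      forall eps, 0 < eps -> exists N : nat, forall k, (N <= k)%nat ->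
        dual_close (DF (vs (phi k))) l eps.

Definition is_m (G : seqV -> R) (q m : R) : Prop :=
  is_lub (fun r => exists v, inV v /\ v <> vzero /\
                      r = G v / powr (Vnorm v) (q + 1)) m.

Definition K0 (G : seqV -> R) (m : R) (v : seqV) : Prop :=
  inV v /\ Vnorm v = 1 /\ G v = m.

Definition dist_le (y : seqV) (S : seqV -> Prop) (d : R) : Prop :=
  forall eps, 0 < eps -> exists w, S w /\ Vnorm (vsub y w) < d + eps.

Definition minimal_period_2pi (v : seqV) : Prop :=
  (forall t x, 0 < x < PI -> vfun v (t + 2 * PI) x = vfun v t x) /\
  forall T, 0 < T ->
    (forall t x, 0 < x < PI -> vfun v (t + T) x = vfun v t x) -> 2 * PI <= T.

(* Main.v *)
Require Import Defs.
From Stdlib Require Import Reals Lra Lia Psatz Classical ClassicalEpsilon FunctionalExtensionality Wf_nat.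
From Coquelicot Require Import Coquelicot.
Open Scope R_scope.


Lemma exs_plus (a b : nat -> R) : ex_series a -> ex_series b -> ex_series (fun n => a n + b n).
Proof. intros Ha Hb. exact (ex_series_plus a b Ha Hb). Qed.
Lemma exs_scal (c : R) (a : nat -> R) : ex_series a -> ex_series (fun n => c * a n).
Proof. intros Ha. exact (ex_series_scal_l c a Ha). Qed.
Lemma exs_minus (a b : nat -> R) : ex_series a -> ex_series b -> ex_series (fun n => a n - b n).
Proof. intros Ha Hb. exact (ex_series_minus a b Ha Hb). Qed.
Lemma exs_ext (a b : nat -> R) : (forall n, a n = b n) -> ex_series a -> ex_series b.
Proof. intros H Ha. exact (ex_series_ext a b H Ha). Qed.
Lemma exs_le (a b : nat -> R) : (forall n, Rabs (a n) <= b n) -> ex_series b -> ex_series a.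
Proof. intros H Hb. apply (ex_series_le a b); auto. Qed.

Lemma sum_le_Series (a : nat -> R) M : (forall n, 0 <= a n) -> ex_series a -> sum_n a M <= Series a.
Proof.
  intros Hp Ha.
  assert (Hl := Series_correct a Ha).
  assert (Hinc: forall n, sum_n a n <= sum_n a (S n)).
  { intros n. rewrite sum_Sn. specialize (Hp (S n)). unfold plus; simpl. lra. }
  assert (H: forall k, sum_n a M <= sum_n a (k + M)).
  { induction k. simpl; lra. simpl. specialize (Hinc (k+M)%nat). lra. }
  assert (Hl' : is_lim_seq (fun k => sum_n a (k + M)%nat) (Series a)).
  { apply (is_lim_seq_incr_n (sum_n a) M). exact Hl. }
  assert (H0 : Rbar_le (sum_n a M) (Series a)).
  { apply (is_lim_seq_le (fun _ => sum_n a M) (fun k => sum_n a (k + M)%nat)); auto.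
    apply is_lim_seq_const. }
  simpl in H0. exact H0.
Qed.

Lemma Series_nonneg (a : nat -> R) : (forall n, 0 <= a n) -> ex_series a -> 0 <= Series a.
Proof. intros Hp Ha. pose proof (sum_le_Series a 0 Hp Ha). rewrite sum_O in H. specialize (Hp 0%nat). lra. Qed.

Lemma sum_n_nonneg (a : nat -> R) M : (forall n, 0 <= a n) -> 0 <= sum_n a M.
Proof.
  intros Hp. induction M. rewrite sum_O; auto.
  rewrite sum_Sn. unfold plus; simpl. specialize (Hp (S M)). lra.
Qed.

Lemma term_le_Series (a : nat -> R) j : (forall n, 0 <= a n) -> ex_series a -> a j <= Series a.
Proof.
  intros Hp Ha. eapply Rle_trans; [| apply (sum_le_Series a j Hp Ha)].
  destruct j. rewrite sum_O; lra.
  rewrite sum_Sn. unfold plus; simpl.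
  pose proof (sum_n_nonneg a j Hp). lra.
Qed.

Lemma bounded_series (a : nat -> R) B : (forall n, 0 <= a n) -> (forall M, sum_n a M <= B) ->
  ex_series a /\ Series a <= B.
Proof.
  intros Hp HB.
  assert (Hinc: forall n, sum_n a n <= sum_n a (S n)).
  { intros n. rewrite sum_Sn. specialize (Hp (S n)). unfold plus; simpl. lra. }
  destruct (ex_finite_lim_seq_incr (sum_n a) B Hinc HB) as [l Hl].
  assert (Hs : is_series a l) by exact Hl.
  split. exists l; exact Hs.
  rewrite (is_series_unique a l Hs).
  assert (H0 : Rbar_le l B).
  { apply (is_lim_seq_le (sum_n a) (fun _ => B)); auto. apply is_lim_seq_const. }
  exact H0.
Qed.

Definition exQ (v : seqV) := ex_series (fun j => (INR j * v j) ^ 2).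
Definition Qs (v : seqV) := Series (fun j => (INR j * v j) ^ 2).
Definition Bs (u w : seqV) := Series (fun j => INR j ^ 2 * u j * w j).
Definition lin2 (a : R) (u : seqV) (b : R) (w : seqV) : seqV := fun j => a * u j + b * w j.

Lemma Qs_ext u w : (forall j, u j = w j) -> Qs u = Qs w.
Proof. intros H; unfold Qs; apply Series_ext; intros; rewrite H; auto. Qed.
Lemma Bs_ext u w u' w' : (forall j, u j = u' j) -> (forall j, w j = w' j) -> Bs u w = Bs u' w'.
Proof. intros H H'; unfold Bs; apply Series_ext; intros; rewrite H, H'; auto. Qed.
Lemma exQ_ext u w : (forall j, u j = w j) -> exQ u -> exQ w.
Proof. intros H; unfold exQ; apply exs_ext; intros; rewrite H; auto. Qed.

Lemma ex_B u w : exQ u -> exQ w -> ex_series (fun j => INR j ^ 2 * u j * w j).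
Proof.
  intros Hu Hw. apply (exs_le _ (fun j => ((INR j * u j)^2 + (INR j * w j)^2) / 2)).
  - intros n; cbv beta. set (x := INR n * u n). set (y := INR n * w n).
    replace (INR n ^ 2 * u n * w n) with (x * y) by (unfold x, y; ring).
    pose proof (pow2_ge_0 (x - y)); pose proof (pow2_ge_0 (x + y)). apply Rabs_le. split; nra.
  - apply (exs_ext (fun j => / 2 * ((INR j * u j)^2 + (INR j * w j)^2))).
    intros n; unfold Rdiv; ring. apply exs_scal, exs_plus; auto.
Qed.

Lemma exQ_lin a u b w : exQ u -> exQ w -> exQ (lin2 a u b w).
Proof.
  intros Hu Hw. unfold exQ, lin2.
  apply (exs_ext (fun j => a^2 * (INR j * u j)^2 + (2*a*b * (INR j ^ 2 * u j * w j) + b^2 * (INR j * w j)^2))).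
  intros; ring.
  apply exs_plus. apply exs_scal; auto. apply exs_plus. apply exs_scal, ex_B; auto. apply exs_scal; auto.
Qed.

Lemma Qs_lin a u b w : exQ u -> exQ w ->
  Qs (lin2 a u b w) = a^2 * Qs u + 2*a*b * Bs u w + b^2 * Qs w.
Proof.
  intros Hu Hw. unfold Qs, Bs, lin2.
  rewrite (Series_ext _ (fun j => a^2 * (INR j * u j)^2 + (2*a*b * (INR j ^ 2 * u j * w j) + b^2 * (INR j * w j)^2))) by (intros; ring).
  rewrite Series_plus. rewrite Series_plus. rewrite !Series_scal_l. ring.
  apply exs_scal, ex_B; auto. apply exs_scal; auto. apply exs_scal; auto.
  apply exs_plus. apply exs_scal, ex_B; auto. apply exs_scal; auto.
Qed.

Lemma Bs_lin a u b w x : exQ u -> exQ w -> exQ x ->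
  Bs (lin2 a u b w) x = a * Bs u x + b * Bs w x.
Proof.
  intros Hu Hw Hx. unfold Bs, lin2.
  rewrite (Series_ext _ (fun j => a * (INR j ^ 2 * u j * x j) + b * (INR j ^ 2 * w j * x j))) by (intros; ring).
  rewrite Series_plus. rewrite !Series_scal_l. ring.
  apply exs_scal, ex_B; auto. apply exs_scal, ex_B; auto.
Qed.

Lemma Bs_sym u w : Bs u w = Bs w u.
Proof. unfold Bs; apply Series_ext; intros; ring. Qed.
Lemma Bs_diag u : Bs u u = Qs u.
Proof. unfold Bs, Qs; apply Series_ext; intros; ring. Qed.
Lemma Qs_nonneg u : exQ u -> 0 <= Qs u.
Proof. intros H. apply Series_nonneg; auto. intros; apply pow2_ge_0. Qed.

Lemma CS u w : exQ u -> exQ w -> Bs u w ^ 2 <= Qs u * Qs w.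
Proof.
  intros Hu Hw.
  assert (H : forall t, 0 <= Qs u + 2 * t * Bs u w + t^2 * Qs w).
  { intros t. pose proof (Qs_lin 1 u t w Hu Hw). pose proof (Qs_nonneg _ (exQ_lin 1 u t w Hu Hw)).
    replace (Qs u) with (1^2 * Qs u) by ring. nra. }
  pose proof (Qs_nonneg u Hu). pose proof (Qs_nonneg w Hw).
  destruct (Req_dec (Qs w) 0) as [E|E].
  - destruct (Req_dec (Bs u w) 0) as [E'|E']. rewrite E'. nra.
    specialize (H (- (Qs u + 1) / (2 * Bs u w))). rewrite E in H.
    replace (2 * (- (Qs u + 1) / (2 * Bs u w)) * Bs u w) with (- (Qs u + 1)) in H by (field; auto). nra.
  - specialize (H (- Bs u w / Qs w)).
    replace (Qs u + 2 * (- Bs u w / Qs w) * Bs u w + (- Bs u w / Qs w) ^ 2 * Qs w)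
      with (Qs u - Bs u w ^2 / Qs w) in H by (field; auto).
    assert (0 < Qs w) by lra.
    apply Rmult_le_compat_r with (r := Qs w) in H; [|lra].
    replace ((Qs u - Bs u w ^ 2 / Qs w) * Qs w) with (Qs u * Qs w - Bs u w ^2) in H by (field; auto). lra.
Qed.

Definition Nn (v : seqV) := sqrt (Qs v).

Lemma Vnorm_Nn v : exQ v -> Vnorm v = PI * Nn v.
Proof.
  intros H. unfold Vnorm, Nn. fold (Qs v).
  rewrite sqrt_mult. rewrite <- (Rsqr_pow2 PI), sqrt_Rsqr. auto.
  pose proof PI_RGT_0; lra. pose proof PI_RGT_0; nra. apply Qs_nonneg; auto.
Qed.

Lemma Nn_nonneg v : 0 <= Nn v.
Proof. apply sqrt_pos. Qed.

Lemma Nn_sq v : exQ v -> Nn v ^ 2 = Qs v.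
Proof. intros H. unfold Nn. rewrite <- Rsqr_pow2. apply Rsqr_sqrt, Qs_nonneg; auto. Qed.

Lemma Bs_bound u w : exQ u -> exQ w -> Rabs (Bs u w) <= Nn u * Nn w.
Proof.
  intros Hu Hw. pose proof (CS u w Hu Hw). rewrite <- (Nn_sq u Hu), <- (Nn_sq w Hw) in H.
  pose proof (Nn_nonneg u); pose proof (Nn_nonneg w).
  rewrite <- (pow2_abs (Bs u w)) in H. pose proof (Rabs_pos (Bs u w)).
  destruct (Rle_dec (Rabs (Bs u w)) (Nn u * Nn w)); auto.
  assert (Nn u * Nn w < Rabs (Bs u w)) by lra. exfalso.
  assert (0 <= Nn u * Nn w) by nra. nra.
Qed.

Lemma Nn_tri u w : exQ u -> exQ w -> Nn (lin2 1 u 1 w) <= Nn u + Nn w.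
Proof.
  intros Hu Hw. unfold Nn at 1. rewrite Qs_lin by auto.
  rewrite <- (Nn_sq u Hu), <- (Nn_sq w Hw).
  pose proof (Bs_bound u w Hu Hw). pose proof (Rle_abs (Bs u w)).
  pose proof (Nn_nonneg u); pose proof (Nn_nonneg w).
  rewrite <- (sqrt_pow2 (Nn u + Nn w)) by lra. apply sqrt_le_1_alt. nra.
Qed.

Lemma Nn_tri3 a b c : exQ a -> exQ b -> exQ c ->
  Nn (fun j => a j - c j) <= Nn (fun j => a j - b j) + Nn (fun j => b j - c j).
Proof.
  intros Ha Hb Hc.
  assert (E1 : exQ (fun j => a j - b j)).
  { apply (exQ_ext (lin2 1 a (-1) b)). intros; unfold lin2; ring. apply exQ_lin; auto. }
  assert (E2 : exQ (fun j => b j - c j)).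
  { apply (exQ_ext (lin2 1 b (-1) c)). intros; unfold lin2; ring. apply exQ_lin; auto. }
  pose proof (Nn_tri _ _ E1 E2). unfold Nn in *.
  rewrite (Qs_ext (fun j => a j - c j) (lin2 1 (fun j => a j - b j) 1 (fun j => b j - c j))). auto.
  intros; unfold lin2; ring.
Qed.

Lemma Qs_scal c u : Qs (fun j => c * u j) = c ^ 2 * Qs u.
Proof. unfold Qs. rewrite <- Series_scal_l. apply Series_ext; intros; ring. Qed.

Lemma Nn_scal c u : exQ u -> Nn (fun j => c * u j) = Rabs c * Nn u.
Proof.
  intros H. unfold Nn. rewrite Qs_scal. rewrite sqrt_mult. rewrite <- Rsqr_pow2, sqrt_Rsqr_abs. auto.
  apply pow2_ge_0. apply Qs_nonneg; auto.
Qed.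

Lemma Rpower_1_base y : Rpower 1 y = 1.
Proof. unfold Rpower. rewrite ln_1, Rmult_0_r, exp_0. auto. Qed.


Lemma exs_le' (a b : nat -> R) : (forall n, Rabs (a n) <= b n) -> ex_series b -> ex_series a.
Proof. intros H Hb. apply (ex_series_le a b); auto. Qed.

Lemma abs_mul_sin c y : Rabs (c * sin y) <= Rabs c.
Proof.
  rewrite Rabs_mult. rewrite <- (Rmult_1_r (Rabs c)) at 2. apply Rmult_le_compat_l. apply Rabs_pos.
  apply Rabs_le, SIN_bound.
Qed.

Lemma sin_nPI n : sin (INR n * PI) = 0.
Proof. apply sin_eq_0_1. exists (Z.of_nat n). rewrite <- INR_IZR_INZ. auto. Qed.

Lemma sin_intPI (a b : nat) : sin ((INR a - INR b) * PI) = 0.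
Proof.
  replace ((INR a - INR b) * PI) with (INR a * PI - INR b * PI) by ring.
  rewrite sin_minus, !sin_nPI. ring.
Qed.

Lemma is_RInt_eq (f : R -> R) a b (l l' : R) : is_RInt f a b l -> l = l' -> is_RInt f a b l'.
Proof. intros H <-; auto. Qed.

Lemma sin_sin_int (j k : nat) : (1 <= j)%nat ->
  is_RInt (fun x => sin (INR k * x) * sin (INR j * x)) 0 PI
    (if Nat.eq_dec k j then PI / 2 else 0).
Proof.
  intros Hj. assert (Jp : 0 < INR j) by (apply lt_0_INR; lia).
  pose proof PI_RGT_0.
  destruct (Nat.eq_dec k j) as [->|Hkj].
  - set (F := fun x => x / 2 - sin (2 * INR j * x) / (4 * INR j)).
    assert (H1 := is_RInt_derive F (fun x => sin (INR j * x) * sin (INR j * x)) 0 PI).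
    replace (PI / 2) with (minus (F PI) (F 0)). apply H1.
    + intros x _. unfold F. auto_derive; auto.
      replace (2 * INR j * x) with (INR j * x + INR j * x) by ring. rewrite cos_plus.
      assert (Hc: cos (INR j * x) * cos (INR j * x) = 1 - sin (INR j * x) * sin (INR j * x))
        by (pose proof (sin2_cos2 (INR j * x)); unfold Rsqr in *; lra).
      rewrite Hc. field. lra.
    + intros x _. apply (ex_derive_continuous (fun y => sin (INR j * y) * sin (INR j * y))). auto_derive; auto.
    + unfold F, minus, plus, opp; simpl.
      replace (2 * INR j * PI) with (INR (2 * j) * PI) by (rewrite mult_INR; simpl; ring).
      rewrite sin_nPI. rewrite Rmult_0_r, sin_0. field. lra.
  - assert (Hd : INR j - INR k <> 0).
    { intro E. apply Hkj. apply INR_eq. lra. }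
    assert (Hs : 0 < INR j + INR k) by (pose proof (pos_INR k); lra).
    set (F := fun x => sin ((INR j - INR k) * x) / (2 * (INR j - INR k)) - sin ((INR j + INR k) * x) / (2 * (INR j + INR k))).
    assert (H1 := is_RInt_derive F (fun x => sin (INR k * x) * sin (INR j * x)) 0 PI).
    refine (is_RInt_eq _ _ _ _ _ (H1 _ _) _).
    + intros x _. unfold F. auto_derive. exact I.
      replace ((INR j - INR k) * x) with (INR j * x - INR k * x) by ring.
      replace ((INR j + INR k) * x) with (INR j * x + INR k * x) by ring.
      rewrite cos_plus, cos_minus. field. split; lra.
    + intros x _. apply (ex_derive_continuous (fun y => sin (INR k * y) * sin (INR j * y))). auto_derive; auto.
    + unfold F, minus, plus, opp; simpl.
      rewrite sin_intPI. replace ((INR j + INR k) * PI) with (INR (j + k) * PI) by (rewrite plus_INR; ring).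
      rewrite sin_nPI. rewrite !Rmult_0_r, sin_0. field. split; lra.
Qed.


Lemma is_RInt_sum_sin (a : nat -> R) (j M : nat) : (1 <= j)%nat ->
  is_RInt (fun x => sum_n (fun k => a k * sin (INR k * x)) M * sin (INR j * x)) 0 PI
    (sum_n (fun k => a k * (if Nat.eq_dec k j then PI / 2 else 0)) M).
Proof.
  intros Hj. induction M.
  - rewrite sum_O. apply (is_RInt_ext (fun x => scal (a 0%nat) (sin (INR 0 * x) * sin (INR j * x)))).
    intros x _. rewrite sum_O. unfold scal; simpl. unfold mult; simpl. ring.
    refine (is_RInt_eq _ _ _ _ _ (is_RInt_scal _ 0 PI (a 0%nat) _ (sin_sin_int j 0%nat Hj)) _).
    reflexivity.
  - rewrite sum_Sn.
    apply (is_RInt_ext (fun x => plus (sum_n (fun k => a k * sin (INR k * x)) M * sin (INR j * x))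
                                 (scal (a (S M)) (sin (INR (S M) * x) * sin (INR j * x))))).
    intros x _. rewrite sum_Sn. unfold scal, plus; simpl. unfold mult; simpl. ring.
    refine (is_RInt_eq _ _ _ _ _ (is_RInt_plus _ _ 0 PI _ _ IHM (is_RInt_scal _ 0 PI (a (S M)) _ (sin_sin_int j (S M) Hj))) _).
    reflexivity.
Qed.

Lemma sum_delta (a : nat -> R) (c : R) (j M : nat) :
  sum_n (fun k => a k * (if Nat.eq_dec k j then c else 0)) M = if Compare_dec.le_dec j M then a j * c else 0.
Proof.
  induction M.
  - rewrite sum_O. cbv beta. destruct (Nat.eq_dec 0 j) as [e|e]; destruct (Compare_dec.le_dec j 0); try lia.
    subst; reflexivity. rewrite Rmult_0_r; reflexivity.
  - rewrite sum_Sn, IHM. cbv beta.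
    destruct (Nat.eq_dec (S M) j) as [e|e]; destruct (Compare_dec.le_dec j M); destruct (Compare_dec.le_dec j (S M)); try lia;
    match goal with |- ?x = ?y => change (@eq R x y) end; unfold plus; simpl; subst; ring.
Qed.

Lemma sum_n_zero M : sum_n (fun _ : nat => 0) M = 0.
Proof. induction M. rewrite sum_O; auto. rewrite sum_Sn, IHM. unfold plus; simpl; ring. Qed.

Lemma fourier_zero (a : nat -> R) :
  ex_series (fun k => Rabs (a k)) ->
  (forall x, 0 < x < PI -> Series (fun k => a k * sin (INR k * x)) = 0) ->
  forall j, (1 <= j)%nat -> a j = 0.
Proof.
  intros Ha H0 j Hj. pose proof PI_RGT_0 as HPI.
  assert (Hb : forall eps, 0 < eps -> Rabs (a j * (PI / 2)) <= PI * eps).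
  { intros eps Heps.
    assert (Hs : is_lim_seq (sum_n (fun k => Rabs (a k))) (Series (fun k => Rabs (a k)))) by exact (Series_correct _ Ha).
    apply is_lim_seq_spec in Hs. destruct (Hs (mkposreal eps Heps)) as [N HN]. simpl in HN.
    set (M := max N j).
    assert (HM : Rabs (sum_n (fun k => Rabs (a k)) M - Series (fun k => Rabs (a k))) < eps) by (apply HN; lia).
    assert (Htail_ex : ex_series (fun k => Rabs (a (S M + k)%nat))) by (apply (ex_series_incr_n (fun k => Rabs (a k)) (S M)); auto).
    assert (Htail : Series (fun k => Rabs (a (S M + k)%nat)) <= eps).
    { rewrite (Series_incr_n (fun k => Rabs (a k)) (S M)) in HM by (auto; lia).
      simpl pred in HM. rewrite <- sum_n_Reals in HM.
      apply Rabs_lt_between in HM. lra. }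
    assert (Hbound : forall x, 0 <= x <= PI -> Rabs (sum_n (fun k => a k * sin (INR k * x)) M * sin (INR j * x)) <= eps).
    { intros x Hx. rewrite Rabs_mult.
      assert (Rabs (sin (INR j * x)) <= 1) by apply Rabs_le, SIN_bound.
      assert (Rabs (sum_n (fun k => a k * sin (INR k * x)) M) <= eps).
      { destruct (Req_dec x 0) as [E|E].
        { subst x. rewrite (sum_n_ext _ (fun _ => 0)), sum_n_zero. rewrite Rabs_R0; lra.
          intros; rewrite Rmult_0_r, sin_0; apply Rmult_0_r. }
        destruct (Req_dec x PI) as [E'|E'].
        { subst x. rewrite (sum_n_ext _ (fun _ => 0)), sum_n_zero. rewrite Rabs_R0; lra.
          intros; rewrite sin_nPI; apply Rmult_0_r. }
        assert (Hex : ex_series (fun k => a k * sin (INR k * x))).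
        { apply (exs_le' _ (fun k => Rabs (a k))); auto. intros k. apply abs_mul_sin. }
        pose proof (H0 x ltac:(lra)) as Hz.
        rewrite (Series_incr_n _ (S M)) in Hz by (auto; lia). simpl pred in Hz.
        rewrite <- sum_n_Reals in Hz.
        assert (Hex2 : ex_series (fun k => Rabs (a (S M + k)%nat * sin (INR (S M + k) * x)))).
        { apply (exs_le' _ (fun k => Rabs (a (S M + k)%nat))); auto. intros k. rewrite Rabs_Rabsolu. apply abs_mul_sin. }
        pose proof (Series_Rabs _ Hex2).
        assert (Series (fun k => Rabs (a (S M + k)%nat * sin (INR (S M + k) * x))) <= Series (fun k => Rabs (a (S M + k)%nat))).
        { apply Series_le; auto. intros k. split. apply Rabs_pos. apply abs_mul_sin. }
        replace (sum_n (fun k => a k * sin (INR k * x)) M) with (- Series (fun k => a (S M + k)%nat * sin (INR (S M + k) * x))) by lra.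
        rewrite Rabs_Ropp. lra. }
      pose proof (Rabs_pos (sin (INR j * x))). pose proof (Rabs_pos (sum_n (fun k : nat => a k * sin (INR k * x)) M)). nra. }
    pose proof (is_RInt_sum_sin a j M Hj) as HI.
    assert (Hex : ex_RInt (fun x => sum_n (fun k => a k * sin (INR k * x)) M * sin (INR j * x)) 0 PI) by (eexists; eauto).
    pose proof (abs_RInt_le_const _ 0 PI eps ltac:(lra) Hex Hbound).
    rewrite (is_RInt_unique _ _ _ _ HI) in H. rewrite sum_delta in H.
    destruct (Compare_dec.le_dec j M); [| lia]. lra. }
  destruct (Req_dec (a j) 0) as [E|E]; auto.
  exfalso. assert (0 < Rabs (a j)) by (apply Rabs_pos_lt; auto).
  specialize (Hb (Rabs (a j) / 4) ltac:(lra)).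
  rewrite Rabs_mult, (Rabs_right (PI/2)) in Hb by lra. nra.
Qed.


Definition dd (j : nat) : R := if Nat.eq_dec j 0 then 0 else 2 / (INR j * (INR j + 1)).

Lemma dd_nonneg j : 0 <= dd j.
Proof.
  unfold dd. destruct (Nat.eq_dec j 0). lra.
  assert (0 < INR j) by (apply lt_0_INR; lia).
  apply Rlt_le, Rdiv_lt_0_compat; nra.
Qed.

Lemma dd_sum M : sum_n dd M <= 2 - 2 / (INR M + 1).
Proof.
  induction M.
  - rewrite sum_O. unfold dd; simpl. lra.
  - rewrite sum_Sn. change (plus (sum_n dd M) (dd (S M))) with (sum_n dd M + dd (S M)).
    unfold dd at 2. destruct (Nat.eq_dec (S M) 0); [lia|].
    rewrite S_INR. pose proof (pos_INR M).
    assert (2 / (INR M + 1 + 1) = 2 / (INR M + 1) - 2 / ((INR M + 1) * (INR M + 1 + 1))) by (field; lra).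
    lra.
Qed.

Lemma ex_dd : ex_series dd.
Proof.
  destruct (bounded_series dd 2 dd_nonneg) as [H _]; auto.
  intros M. pose proof (dd_sum M). pose proof (pos_INR M).
  assert (0 < 2 / (INR M + 1)) by (apply Rdiv_lt_0_compat; lra). lra.
Qed.

Lemma inV_abs v : inV v -> ex_series (fun j => Rabs (v j)).
Proof.
  intros [H0 HQ].
  apply (exs_le _ (fun j => (INR j * v j) ^ 2 + dd j)).
  - intros j. rewrite Rabs_Rabsolu. destruct (Nat.eq_dec j 0) as [->|Hj].
    + rewrite H0, Rabs_R0. pose proof (dd_nonneg 0). simpl. nra.
    + unfold dd. destruct (Nat.eq_dec j 0); [lia|].
      assert (Jp : 1 <= INR j) by (apply (le_INR 1); lia).
      set (J := INR j) in *.
      assert (E : Rabs (v j) = Rabs (J * v j) * / J).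
      { rewrite Rabs_mult, (Rabs_right J) by lra. field. lra. }
      rewrite E. set (y := Rabs (J * v j)).
      assert (Ey : (J * v j) ^ 2 = y ^ 2) by (unfold y; rewrite <- (pow2_abs (J * v j)); auto).
      rewrite Ey. assert (0 < / J) by (apply Rinv_0_lt_compat; lra).
      assert (/ J * / J <= 2 / (J * (J + 1))).
      { replace (2 / (J * (J + 1))) with (/ J * (2 / (J + 1))) by (field; lra).
        apply Rmult_le_compat_l. lra. apply (Rmult_le_reg_l J). lra.
        replace (J * / J) with 1 by (field; lra). replace (J * (2 / (J+1))) with (2 * J / (J+1)) by (field; lra).
        apply (Rmult_le_reg_r (J+1)). lra. unfold Rdiv. rewrite Rmult_assoc, Rinv_l by lra. lra. }
      pose proof (pow2_ge_0 (y - / J)). nra.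
  - apply exs_plus; auto. apply ex_dd.
Qed.

Lemma cos1_sin0 y : cos y = 1 -> sin y = 0.
Proof. intros H. pose proof (sin2_cos2 y). unfold Rsqr in H0. rewrite H in H0. nra. Qed.

Lemma P_add T a b : cos (INR a * T) = 1 -> cos (INR b * T) = 1 -> cos (INR (a + b) * T) = 1.
Proof.
  intros Ha Hb. rewrite plus_INR. replace ((INR a + INR b) * T) with (INR a * T + INR b * T) by ring.
  rewrite cos_plus, Ha, Hb, (cos1_sin0 _ Ha). ring.
Qed.

Lemma P_sub T a b : (b <= a)%nat -> cos (INR a * T) = 1 -> cos (INR b * T) = 1 -> cos (INR (a - b) * T) = 1.
Proof.
  intros Hle Ha Hb. rewrite minus_INR by auto. replace ((INR a - INR b) * T) with (INR a * T - INR b * T) by ring.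
  rewrite cos_minus, Ha, Hb, (cos1_sin0 _ Ha), (cos1_sin0 _ Hb). ring.
Qed.

Lemma P_mul T b k : cos (INR b * T) = 1 -> cos (INR (k * b) * T) = 1.
Proof.
  intros Hb. induction k. simpl. rewrite Rmult_0_l; apply cos_0.
  replace (S k * b)%nat with (k * b + b)%nat by lia. apply P_add; auto.
Qed.

Lemma P_mod T a b : (b <> 0)%nat -> cos (INR a * T) = 1 -> cos (INR b * T) = 1 -> cos (INR (a mod b) * T) = 1.
Proof.
  intros Hb Ha Hb1. rewrite (Nat.mod_eq a b Hb).
  apply P_sub; auto. pose proof (Nat.mul_div_le a b Hb). lia.
  rewrite Nat.mul_comm. apply P_mul; auto.
Qed.

Lemma least_ex (P : nat -> Prop) j : P j -> exists N, P N /\ forall k, (k < N)%nat -> ~ P k.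
Proof.
  revert j. intros j. induction j as [j IH] using (well_founded_induction lt_wf). intros Hj.
  destruct (classic (exists k, (k < j)%nat /\ P k)) as [[k [Hk Pk]]|Hn].
  - apply (IH k Hk Pk).
  - exists j. split; auto. intros k Hk Pk. apply Hn. eauto.
Qed.

Lemma cos_T_ne1 T : 0 < T < 2 * PI -> cos T <> 1.
Proof.
  intros HT E. pose proof (cos1_sin0 _ E). pose proof PI_RGT_0.
  destruct (sin_eq_O_2PI_0 T) as [H1|[H1|H1]]; try lra. subst T. rewrite cos_PI in E. lra.
Qed.

Lemma abs_ccs c a b : Rabs (c * cos a * sin b) <= Rabs c.
Proof.
  eapply Rle_trans. apply abs_mul_sin. rewrite Rabs_mult.
  rewrite <- (Rmult_1_r (Rabs c)) at 2. apply Rmult_le_compat_l. apply Rabs_pos.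
  apply Rabs_le, COS_bound.
Qed.

Lemma period_support (v : seqV) T : inV v -> 0 < T < 2 * PI ->
  (forall t x, 0 < x < PI -> vfun v (t + T) x = vfun v t x) ->
  exists n, (2 <= n)%nat /\ forall j, v j <> 0 -> (j mod n = 0)%nat.
Proof.
  intros Hv HT Hp. pose proof (inV_abs v Hv) as Habs.
  assert (Hc : forall j, v j <> 0 -> cos (INR j * T) = 1).
  { intros j Hj.
    assert (Hj1 : (1 <= j)%nat). { destruct j. destruct Hv as [H0 _]. congruence. lia. }
    set (a := fun k => v k * (cos (INR k * (0 + T)) - cos (INR k * 0))).
    assert (Ha : ex_series (fun k => Rabs (a k))).
    { apply (exs_le _ (fun k => 2 * Rabs (v k))). intros k. rewrite Rabs_Rabsolu. unfold a.
      rewrite Rabs_mult. pose proof (Rabs_pos (v k)).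
      assert (Rabs (cos (INR k * (0 + T)) - cos (INR k * 0)) <= 2).
      { pose proof (COS_bound (INR k * (0 + T))). pose proof (COS_bound (INR k * 0)). apply Rabs_le; lra. }
      nra. apply exs_scal; auto. }
    assert (H0 : forall x, 0 < x < PI -> Series (fun k => a k * sin (INR k * x)) = 0).
    { intros x Hx. specialize (Hp 0 x Hx). unfold vfun in Hp.
      assert (E1 : ex_series (fun k => v k * cos (INR k * (0 + T)) * sin (INR k * x))).
      { apply (exs_le _ (fun k => Rabs (v k))); auto. intros k. apply abs_ccs. }
      assert (E2 : ex_series (fun k => v k * cos (INR k * 0) * sin (INR k * x))).
      { apply (exs_le _ (fun k => Rabs (v k))); auto. intros k. apply abs_ccs. }
      rewrite (Series_ext _ (fun k => v k * cos (INR k * (0 + T)) * sin (INR k * x) - v k * cos (INR k * 0) * sin (INR k * x))).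
      rewrite Series_minus; auto. lra. intros k; unfold a; ring. }
    pose proof (fourier_zero a Ha H0 j Hj1) as Hz. unfold a in Hz.
    rewrite Rmult_0_r, cos_0, Rplus_0_l in Hz. apply Rmult_integral in Hz. destruct Hz; [congruence| lra]. }
  destruct (classic (exists j, v j <> 0)) as [[j Hj]|Hn].
  - assert (Hj1 : (1 <= j)%nat). { destruct j. destruct Hv as [H0 _]. congruence. lia. }
    destruct (least_ex (fun k => (1 <= k)%nat /\ cos (INR k * T) = 1) j (conj Hj1 (Hc j Hj))) as [N [[HN1 HN2] HNmin]].
    exists N. split.
    + destruct (Nat.eq_dec N 1) as [->|]; [|lia]. exfalso. apply (cos_T_ne1 T HT). rewrite <- HN2. simpl; f_equal; ring.
    + intros k Hk. pose proof (P_mod T k N ltac:(lia) (Hc k Hk) HN2).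
      destruct (Nat.eq_dec (k mod N) 0); auto. exfalso.
      apply (HNmin (k mod N)). apply Nat.mod_upper_bound; lia. split; auto; lia.
  - exists 2%nat. split; auto. intros j Hj. exfalso. apply Hn. eauto.
Qed.


Lemma sum_n_mono (a : nat -> R) N k : (forall n, 0 <= a n) -> sum_n a N <= sum_n a (N + k).
Proof.
  intros Hp. induction k. rewrite Nat.add_0_r; lra.
  rewrite Nat.add_succ_r, sum_Sn. change (plus (sum_n a (N + k)) (a (S (N + k)))) with (sum_n a (N + k) + a (S (N + k))).
  specialize (Hp (S (N + k))). lra.
Qed.

Lemma sum_n_gap (a : nat -> R) N d : (forall n, 0 <= a n) -> sum_n a N + a (N + S d)%nat <= sum_n a (N + S d).
Proof.
  intros Hp. rewrite Nat.add_succ_r, sum_Sn.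
  change (plus (sum_n a (N + d)) (a (S (N + d)))) with (sum_n a (N + d) + a (S (N + d))).
  pose proof (sum_n_mono a N d Hp). lra.
Qed.

Lemma term_le_sum (a : nat -> R) j : (forall n, 0 <= a n) -> a j <= sum_n a j.
Proof.
  intros Hp. destruct j. rewrite sum_O; lra.
  rewrite sum_Sn. change (plus (sum_n a j) (a (S j))) with (sum_n a j + a (S j)).
  pose proof (sum_n_nonneg a j Hp). lra.
Qed.

Lemma subseries (a : nat -> R) (phi : nat -> nat) : (forall n, 0 <= a n) -> ex_series a ->
  (forall k, (phi k < phi (S k))%nat) ->
  ex_series (fun k => a (phi k)) /\ Series (fun k => a (phi k)) <= Series a.
Proof.
  intros Hp Ha Hphi.
  assert (H : forall M, sum_n (fun k => a (phi k)) M <= sum_n a (phi M)).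
  { induction M. rewrite sum_O. apply term_le_sum; auto.
    rewrite sum_Sn. change (plus (sum_n (fun k => a (phi k)) M) (a (phi (S M)))) with (sum_n (fun k => a (phi k)) M + a (phi (S M))).
    specialize (Hphi M). pose proof (sum_n_gap a (phi M) (phi (S M) - phi M - 1) Hp).
    replace (phi M + S (phi (S M) - phi M - 1))%nat with (phi (S M)) in H by lia. lra. }
  apply bounded_series. intros; apply Hp.
  intros M. eapply Rle_trans. apply H. apply sum_le_Series; auto.
Qed.

Lemma Qs_zero v : exQ v -> Qs v = 0 -> forall j, (1 <= j)%nat -> v j = 0.
Proof.
  intros H HQ j Hj. pose proof (term_le_Series (fun j => (INR j * v j)^2) j (fun n => pow2_ge_0 _) H).
  fold (Qs v) in H0. rewrite HQ in H0. assert (0 < INR j) by (apply lt_0_INR; lia).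
  pose proof (pow2_ge_0 (INR j * v j)). assert ((INR j * v j) ^ 2 = 0) by lra.
  assert (INR j * v j = 0) by nra. apply Rmult_integral in H4. destruct H4; lra.
Qed.

Lemma Rpower_1_base_loc y : Rpower 1 y = 1.
Proof. unfold Rpower. rewrite ln_1, Rmult_0_r, exp_0. auto. Qed.

Lemma K0_not_Ln (q : R) (G : seqV -> R) (m : R) :
  1 < q -> is_m G q m -> 0 < m ->
  (forall (n : nat) v, (2 <= n)%nat -> inV v -> 0 < G (Lop n v) ->
      G (Lop n v) < Rpower (INR n) (q + 1) * G v) ->
  forall z n, inV z -> Vnorm z = 1 -> G z = m -> (2 <= n)%nat ->
  (forall j, z j <> 0 -> (j mod n = 0)%nat) -> False.
Proof.
  intros Hq Hm Hm0 HL z n Hz Hnz HGz Hn Hsupp.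
  set (w := fun k => z (n * k)%nat).
  assert (Hzw : Lop n w = z).
  { apply functional_extensionality. intros k. unfold Lop, w.
    destruct (Nat.eqb (k mod n) 0) eqn:E.
    - apply Nat.eqb_eq in E. f_equal. rewrite (Nat.div_mod_eq k n) at 2. lia.
    - apply Nat.eqb_neq in E. destruct (Req_dec (z k) 0); auto. exfalso; apply E, Hsupp; auto. }
  destruct Hz as [Hz0 HzQ].
  assert (Hsub := subseries (fun j => (INR j * z j)^2) (fun k => (n * k)%nat) (fun _ => pow2_ge_0 _) HzQ
                   ltac:(intros k; cbv beta; nia)).
  destruct Hsub as [Hsub1 Hsub2]. simpl in Hsub1, Hsub2.
  assert (Hn1 : 2 <= INR n) by (apply (le_INR 2); auto).
  assert (HwQ : exQ w).
  { unfold exQ. apply (exs_le _ (fun k => (INR (n * k) * z (n * k)%nat) ^ 2)); auto.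
    intros k; cbv beta. rewrite Rabs_right by apply Rle_ge, pow2_ge_0. unfold w. rewrite mult_INR.
    pose proof (pos_INR k). pose proof (pow2_ge_0 (INR k * z (n * k)%nat)).
    replace ((INR n * INR k * z (n * k)%nat) ^ 2) with (INR n ^ 2 * (INR k * z (n * k)%nat) ^ 2) by ring. set (Y := (INR k * z (n * k)%nat) ^ 2) in *. clearbody Y. assert (1 <= INR n ^ 2) by nra. nra. }
  assert (HQw : INR n ^ 2 * Qs w <= Qs z).
  { unfold Qs. rewrite <- Series_scal_l. eapply Rle_trans; [| apply Hsub2].
    right. apply Series_ext. intros k. unfold w. rewrite mult_INR. ring. }
  assert (Hw0 : w 0%nat = 0) by (unfold w; rewrite Nat.mul_0_r; auto).
  assert (HwV : inV w) by (split; auto).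
  assert (HQz : Qs z = / PI ^ 2).
  { rewrite Vnorm_Nn in Hnz by auto. unfold Nn in Hnz. pose proof PI_RGT_0.
    assert (sqrt (Qs z) = / PI) by (field_simplify; [|lra]; rewrite <- Hnz; field; lra).
    rewrite <- (sqrt_sqrt (Qs z)) by (apply Qs_nonneg; auto). rewrite H0. field. lra. }
  assert (HQw_pos : 0 < Qs w).
  { destruct (Qs_nonneg w HwQ) as [|E]; auto. exfalso.
    pose proof (Qs_zero w HwQ (eq_sym E)) as Hw.
    assert (Lop n w = vzero).
    { apply functional_extensionality; intros k. unfold Lop, vzero.
      destruct (Nat.eqb (k mod n) 0); auto. destruct (Nat.div k n) eqn:Ek. auto. apply Hw; lia. }
    rewrite Hzw in H. rewrite H in HQz. unfold Qs, vzero in HQz.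
    rewrite (Series_ext _ (fun _ => 0 * 0)) in HQz by (intros; ring). rewrite Series_scal_l in HQz.
    pose proof PI_RGT_0. assert (0 < / PI ^ 2) by (apply Rinv_0_lt_compat; nra). lra. }
  assert (Hwne : w <> vzero).
  { intros E. rewrite E in HQw_pos. unfold Qs, vzero in HQw_pos.
    rewrite (Series_ext _ (fun _ => 0 * 0)) in HQw_pos by (intros; ring). rewrite Series_scal_l in HQw_pos. lra. }
  assert (HVw : 0 < Vnorm w).
  { rewrite Vnorm_Nn by auto. unfold Nn. pose proof PI_RGT_0. apply Rmult_lt_0_compat; auto. apply sqrt_lt_R0; auto. }
  assert (HGw : G w <= m * Rpower (Vnorm w) (q + 1)).
  { destruct Hm as [Hub _]. specialize (Hub (G w / powr (Vnorm w) (q + 1))).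
    assert (Hpw : powr (Vnorm w) (q + 1) = Rpower (Vnorm w) (q + 1)).
    { unfold powr. destruct (Rle_dec (Vnorm w) 0); auto; lra. }
    rewrite Hpw in Hub. assert (0 < Rpower (Vnorm w) (q + 1)) by (unfold Rpower; apply exp_pos).
    assert (G w / Rpower (Vnorm w) (q + 1) <= m) by (apply Hub; exists w; repeat split; auto; rewrite Hpw; auto).
    apply (Rmult_le_compat_r (Rpower (Vnorm w) (q + 1))) in H0; [|lra].
    unfold Rdiv in H0. rewrite Rmult_assoc, Rinv_l in H0 by lra. lra. }
  assert (HnVw : INR n * Vnorm w <= 1).
  { rewrite <- Hnz. rewrite !Vnorm_Nn by auto. unfold Nn. pose proof PI_RGT_0.
    assert (E : sqrt (INR n ^ 2 * Qs w) = INR n * sqrt (Qs w)).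
    { rewrite sqrt_mult by (try apply pow2_ge_0; lra). rewrite sqrt_pow2 by lra. auto. }
    assert (sqrt (INR n ^ 2 * Qs w) <= sqrt (Qs z)) by (apply sqrt_le_1_alt; auto).
    rewrite E in H0. replace (INR n * (PI * sqrt (Qs w))) with (PI * (INR n * sqrt (Qs w))) by ring.
    apply Rmult_le_compat_l; lra. }
  assert (HGz0 : 0 < G (Lop n w)) by (rewrite Hzw; lra).
  pose proof (HL n w Hn HwV HGz0) as HLt. rewrite Hzw, HGz in HLt.
  assert (Hpn : 0 < Rpower (INR n) (q + 1)) by (unfold Rpower; apply exp_pos).
  assert (Rpower (INR n) (q + 1) * G w <= m * Rpower (INR n * Vnorm w) (q + 1)).
  { rewrite <- Rpower_mult_distr by lra.
    apply (Rmult_le_compat_l (Rpower (INR n) (q + 1))) in HGw; [|lra]. lra. }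
  assert (Rpower (INR n * Vnorm w) (q + 1) <= 1).
  { eapply Rle_trans. apply (Rle_Rpower_l _ 1). lra. split; auto. nra. rewrite Rpower_1_base_loc; lra. }
  nra.
Qed.


Lemma Vnorm_Qs v : Vnorm v = sqrt (PI ^ 2 * Qs v).
Proof. reflexivity. Qed.

Lemma Vnorm_vzero : Vnorm vzero = 0.
Proof.
  rewrite Vnorm_Qs. unfold Qs, vzero.
  rewrite (Series_ext _ (fun _ => 0 * 0)) by (intros; ring). rewrite Series_scal_l.
  rewrite Rmult_0_l, Rmult_0_r, sqrt_0. auto.
Qed.

Lemma Vnorm_nonneg v : 0 <= Vnorm v.
Proof. apply sqrt_pos. Qed.

Lemma ub_G (G : seqV -> R) q m : is_m G q m ->
  forall v, inV v -> 0 < Vnorm v -> G v <= m * Rpower (Vnorm v) (q + 1).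
Proof.
  intros Hm v Hv HV. destruct Hm as [Hub _]. specialize (Hub (G v / powr (Vnorm v) (q + 1))).
  assert (Hpw : powr (Vnorm v) (q + 1) = Rpower (Vnorm v) (q + 1)).
  { unfold powr. destruct (Rle_dec (Vnorm v) 0); auto; lra. }
  assert (Hne : v <> vzero) by (intros E; rewrite E, Vnorm_vzero in HV; lra).
  rewrite Hpw in Hub. assert (0 < Rpower (Vnorm v) (q + 1)) by (unfold Rpower; apply exp_pos).
  assert (G v / Rpower (Vnorm v) (q + 1) <= m). { apply Hub; exists v. split; [exact Hv|]. split; [exact Hne|]. rewrite Hpw; reflexivity. }
  apply (Rmult_le_compat_r (Rpower (Vnorm v) (q + 1))) in H0; [|lra].
  unfold Rdiv in H0. rewrite Rmult_assoc, Rinv_l in H0 by lra. lra.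
Qed.

Lemma inV_lin2 a u b w : inV u -> inV w -> inV (lin2 a u b w).
Proof. intros [Hu0 Hu] [Hw0 Hw]. split. unfold lin2; rewrite Hu0, Hw0; ring. apply exQ_lin; auto. Qed.

Lemma dual_scal (l : seqV -> R) s u : is_dual l -> inV u -> l (vscal s u) = s * l u.
Proof.
  intros [Hlin _] Hu. specialize (Hlin u u s 0 Hu Hu).
  replace (vadd (vscal s u) (vscal 0 u)) with (vscal s u) in Hlin. lra.
  apply functional_extensionality; intros j; unfold vadd, vscal; ring.
Qed.

Lemma lagrange (q : R) (G : seqV -> R) (DG : seqV -> seqV -> R) (m : R) :
  1 < q -> is_frechet_on inV G DG -> is_m G q m -> 0 < m ->
  forall z u, inV z -> Vnorm z = 1 -> G z = m -> inV u ->
  DG z u = (q + 1) * m * (PI ^ 2 * Bs z u).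
Proof.
  intros Hq HF Hm Hm0 z u Hz Hnz HGz Hu.
  pose proof PI_RGT_0 as HPI.
  set (a := PI ^ 2 * Bs z u). set (b := PI ^ 2 * Qs u).
  assert (HQz : PI ^ 2 * Qs z = 1).
  { rewrite Vnorm_Qs in Hnz. rewrite <- (sqrt_sqrt (PI ^ 2 * Qs z)). rewrite Hnz; ring.
    apply Rmult_le_pos. nra. apply Qs_nonneg, Hz. }
  assert (Hb : 0 <= b) by (unfold b; apply Rmult_le_pos; [nra| apply Qs_nonneg, Hu]).
  set (p := / 2 * (q + 1)).
  set (X := fun s => 1 + 2 * a * s + b * s ^ 2).
  set (f := fun s => Rpower (X s) p).
  assert (Hys : forall s, inV (vadd z (vscal s u)) /\ PI ^ 2 * Qs (vadd z (vscal s u)) = X s).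
  { intros s. assert (E : vadd z (vscal s u) = lin2 1 z s u).
    { apply functional_extensionality; intros j; unfold vadd, vscal, lin2; ring. }
    rewrite E. split. apply inV_lin2; auto.
    rewrite Qs_lin by (apply Hz || apply Hu). unfold X, a, b. nra. }
  assert (HX : exists s0, 0 < s0 /\ forall s, Rabs s < s0 -> / 2 < X s).
  { exists (/ (4 * (Rabs a + b + 1))). split. apply Rinv_0_lt_compat. pose proof (Rabs_pos a); lra.
    intros s Hs. unfold X. pose proof (Rabs_pos a) as Ha0.
    assert (Hs1 : Rabs s * (4 * (Rabs a + b + 1)) < 1).
    { apply (Rmult_lt_compat_r (4 * (Rabs a + b + 1))) in Hs; [|lra]. rewrite Rinv_l in Hs; lra. }
    assert (Hs2 : Rabs s < 1) by nra.
    assert (Hm2 : - (2 * Rabs a * Rabs s) <= 2 * a * s).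
    { pose proof (Rle_abs (- (2 * a * s))) as Hr. rewrite Rabs_Ropp in Hr.
      rewrite !Rabs_mult in Hr. rewrite (Rabs_right 2) in Hr by lra. lra. }
    assert (0 <= b * s ^ 2) by (apply Rmult_le_pos; auto; apply pow2_ge_0).
    pose proof (Rabs_pos s). nra. }
  destruct HX as [s0 [Hs0 HX]].
  assert (Hup : forall s, Rabs s < s0 -> G (vadd z (vscal s u)) <= m * f s).
  { intros s Hs. destruct (Hys s) as [Hv HQ]. specialize (HX s Hs).
    assert (HVn : Vnorm (vadd z (vscal s u)) = sqrt (X s)) by (rewrite Vnorm_Qs, HQ; auto).
    assert (0 < Vnorm (vadd z (vscal s u))) by (rewrite HVn; apply sqrt_lt_R0; lra).
    pose proof (ub_G G q m Hm _ Hv H). rewrite HVn in H0. unfold f.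
    rewrite <- Rpower_sqrt in H0 by lra. rewrite Rpower_mult in H0. fold p in H0. exact H0. }
  assert (Hd : derivable_pt_lim f 0 ((q + 1) * a)).
  { assert (HX' : derivable_pt_lim X 0 (2 * a)).
    { apply is_derive_Reals. unfold X. auto_derive; auto. ring. }
    assert (Hp' : derivable_pt_lim (fun y => Rpower y p) (X 0) (p * Rpower (X 0) (p - 1))).
    { apply derivable_pt_lim_power. unfold X; lra. }
    pose proof (derivable_pt_lim_comp X (fun y => Rpower y p) 0 _ _ HX' Hp') as Hc.
    replace (X 0) with 1 in Hc by (unfold X; ring). rewrite Rpower_1_base in Hc.
    replace ((q + 1) * a) with (p * 1 * (2 * a)) by (unfold p; field). exact Hc. }
  assert (Hf0 : f 0 = 1) by (unfold f, X; replace (1 + 2 * a * 0 + b * 0 ^ 2) with 1 by ring; apply Rpower_1_base).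
  set (Vu := Vnorm u).
  assert (HVu : 0 <= Vu) by apply Vnorm_nonneg.
  assert (Hdual : is_dual (DG z)) by (apply (HF z Hz)).
  assert (Hvs : forall s, Vnorm (vscal s u) = Rabs s * Vu).
  { intros s. unfold Vu. rewrite !Vnorm_Nn. unfold vscal. rewrite Nn_scal by apply Hu. ring.
    apply Hu. apply (exQ_ext (lin2 s u 0 u)). intros; unfold lin2, vscal; ring. apply exQ_lin; apply Hu. }
  assert (Hvsin : forall s, inV (vscal s u)).
  { intros s. replace (vscal s u) with (lin2 s u 0 u). apply inV_lin2; auto.
    apply functional_extensionality; intros j; unfold vscal, lin2; ring. }
  assert (Key : forall eps, 0 < eps -> Rabs (DG z u - (q + 1) * m * a) <= eps * (m + Vu)).
  { intros eps Heps.
    destruct (proj2 (HF z Hz) eps Heps) as [delta [Hdelta Hfr]].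
    destruct (Hd eps Heps) as [d2 Hd2].
    set (s1 := Rmin (Rmin (s0 / 2) (d2 / 2)) (delta / (2 * (Vu + 1)))).
    assert (Hs1 : 0 < s1).
    { unfold s1. apply Rmin_pos. apply Rmin_pos. lra. destruct d2; simpl; lra.
      apply Rdiv_lt_0_compat; lra. }
    assert (Hs1a : s1 < s0) by (unfold s1; pose proof (Rmin_l (Rmin (s0/2) (d2/2)) (delta / (2 * (Vu + 1)))); pose proof (Rmin_l (s0/2) (d2/2)); lra).
    assert (Hs1b : s1 < d2) by (unfold s1; pose proof (Rmin_l (Rmin (s0/2) (d2/2)) (delta / (2 * (Vu + 1)))); pose proof (Rmin_r (s0/2) (d2/2)); destruct d2; simpl in *; lra).
    assert (Hs1c : s1 * Vu < delta).
    { unfold s1. pose proof (Rmin_r (Rmin (s0/2) (d2/2)) (delta / (2 * (Vu + 1)))).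
      assert (delta / (2 * (Vu + 1)) * Vu < delta).
      { apply (Rmult_lt_reg_r (2 * (Vu + 1))). lra. unfold Rdiv.
        replace (delta * / (2 * (Vu + 1)) * Vu * (2 * (Vu + 1))) with (delta * Vu) by (field; lra). nra. }
      set (s1' := Rmin (Rmin (s0 / 2) (d2 / 2)) (delta / (2 * (Vu + 1)))) in *. nra. }
    assert (Hineq : forall s, s <> 0 -> Rabs s <= s1 ->
               s * DG z u <= m * (f s - 1) + eps * Rabs s * Vu).
    { intros s Hs Hss.
      destruct (Hys s) as [Hv _].
      assert (Hn : Vnorm (vscal s u) < delta) by (rewrite Hvs; pose proof (Rabs_pos s); nra).
      pose proof (Hfr (vscal s u) (Hvsin s) Hn Hv) as Hf.
      rewrite (dual_scal _ s u Hdual Hu), Hvs in Hf.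
      pose proof (Hup s ltac:(lra)). rewrite HGz in Hf.
      apply Rabs_le_between in Hf. lra. }
    assert (Hpos := Hineq s1 ltac:(lra) ltac:(rewrite Rabs_right; lra)).
    assert (Hneg := Hineq (- s1) ltac:(lra) ltac:(rewrite Rabs_Ropp, Rabs_right; lra)).
    assert (D1 := Hd2 s1 ltac:(lra) ltac:(rewrite Rabs_right; lra)).
    assert (D2 := Hd2 (- s1) ltac:(lra) ltac:(rewrite Rabs_Ropp, Rabs_right; lra)).
    rewrite Rplus_0_l, Hf0 in D1, D2.
    rewrite Rabs_right in Hpos by lra. rewrite Rabs_Ropp, Rabs_right in Hneg by lra.
    apply Rabs_lt_between in D1. apply Rabs_lt_between in D2.
    assert (E1 : f s1 - 1 < s1 * ((q + 1) * a + eps)).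
    { destruct D1 as [_ D1]. assert (Q1 : (f s1 - 1) / s1 < (q + 1) * a + eps) by lra.
      apply (Rmult_lt_compat_l s1) in Q1; [|lra].
      replace (s1 * ((f s1 - 1) / s1)) with (f s1 - 1) in Q1 by (field; lra). exact Q1. }
    assert (E2 : f (- s1) - 1 < - s1 * ((q + 1) * a - eps)).
    { destruct D2 as [D2 _]. assert (Q2 : (q + 1) * a - eps < (f (- s1) - 1) / (- s1)) by lra.
      apply (Rmult_lt_compat_l s1) in Q2; [|lra].
      replace (s1 * ((f (- s1) - 1) / (- s1))) with (- (f (- s1) - 1)) in Q2 by (field; lra). lra. }
    assert (U1 : DG z u <= m * ((q + 1) * a + eps) + eps * Vu).
    { apply (Rmult_le_reg_l s1). lra. nra. }
    assert (U2 : m * ((q + 1) * a - eps) - eps * Vu <= DG z u).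
    { apply (Rmult_le_reg_l s1). lra. nra. }
    apply Rabs_le. split; nra. }
  destruct (Req_dec (DG z u - (q + 1) * m * a) 0) as [E|E]. unfold a in E. apply Rminus_diag_uniq; exact E.
  exfalso. assert (0 < Rabs (DG z u - (q + 1) * m * a)) by (apply Rabs_pos_lt; auto).
  specialize (Key (Rabs (DG z u - (q + 1) * m * a) / (2 * (m + Vu))) ltac:(apply Rdiv_lt_0_compat; lra)).
  replace (Rabs (DG z u - (q + 1) * m * a) / (2 * (m + Vu)) * (m + Vu)) with (Rabs (DG z u - (q + 1) * m * a) / 2) in Key by (field; lra).
  lra.
Qed.


Lemma exQ_diff u w : exQ u -> exQ w -> exQ (fun j => u j - w j).
Proof. intros Hu Hw. apply (exQ_ext (lin2 1 u (-1) w)). intros; unfold lin2; ring. apply exQ_lin; auto. Qed.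

Lemma coef_bound c j : exQ c -> (1 <= j)%nat -> Rabs (c j) <= Nn c.
Proof.
  intros Hc Hj. pose proof (term_le_Series (fun j => (INR j * c j)^2) j (fun n => pow2_ge_0 _) Hc) as H.
  fold (Qs c) in H. rewrite <- (Nn_sq c Hc) in H.
  assert (1 <= INR j) by (apply (le_INR 1); auto).
  assert (c j ^ 2 <= Nn c ^ 2).
  { eapply Rle_trans; [| exact H]. replace ((INR j * c j) ^ 2) with (INR j ^ 2 * c j ^ 2) by ring.
    pose proof (pow2_ge_0 (c j)). assert (1 <= INR j ^ 2) by nra. nra. }
  rewrite <- (pow2_abs (c j)) in H1. pose proof (Rabs_pos (c j)). pose proof (Nn_nonneg c).
  destruct (Rle_dec (Rabs (c j)) (Nn c)); auto. nra.
Qed.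

Lemma lim_term (u : nat -> R) (l : R) c d : is_lim_seq u l ->
  is_lim_seq (fun a => (c * (d - u a)) ^ 2) ((c * (d - l)) ^ 2).
Proof.
  intros H.
  assert (H1 : is_lim_seq (fun a => c * (d - u a)) (c * (d - l))).
  { pose proof (is_lim_seq_scal_l _ c _ (is_lim_seq_minus' _ _ _ _ (is_lim_seq_const d) H)) as H0. simpl in H0. exact H0. }
  assert (H2 := is_lim_seq_mult' _ _ _ _ H1 (is_lim_seq_mult' _ _ _ _ H1 (is_lim_seq_const 1))).
  replace ((c * (d - l)) ^ 2) with ((c * (d - l)) * ((c * (d - l)) * 1)) by ring.
  eapply is_lim_seq_ext; [| exact H2]. intros; simpl; ring.
Qed.

Lemma lim_sum (s : nat -> seqV) (z : seqV) (x : seqV) M :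
  (forall j, is_lim_seq (fun a => s a j) (z j)) ->
  is_lim_seq (fun a => sum_n (fun j => (INR j * (x j - s a j)) ^ 2) M)
             (sum_n (fun j => (INR j * (x j - z j)) ^ 2) M).
Proof.
  intros H. induction M.
  - apply (is_lim_seq_ext (fun a => (INR 0 * (x 0%nat - s a 0%nat)) ^ 2)). intros; rewrite sum_O; reflexivity.
    rewrite sum_O. apply lim_term; auto.
  - apply (is_lim_seq_ext (fun a => sum_n (fun j => (INR j * (x j - s a j)) ^ 2) M + (INR (S M) * (x (S M) - s a (S M))) ^ 2)).
    intros; rewrite sum_Sn; reflexivity. rewrite sum_Sn.
    apply (is_lim_seq_plus' _ _ _ _ IHM). apply lim_term; auto.
Qed.

Lemma complete_V (s : nat -> seqV) :
  (forall k, inV (s k)) ->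
  (forall eps, 0 < eps -> exists N, forall a b, (N <= a)%nat -> (N <= b)%nat ->
      Nn (fun j => s a j - s b j) <= eps) ->
  exists z, inV z /\ forall eps, 0 < eps -> exists N, forall k, (N <= k)%nat ->
      Nn (fun j => s k j - z j) <= eps.
Proof.
  intros Hs HC.
  assert (Hcj : forall j, ex_finite_lim_seq (fun a => s a j)).
  { intros j. apply ex_lim_seq_cauchy_corr. intros eps.
    destruct (HC (eps / 2)) as [N HN]. destruct eps; simpl; lra.
    exists N. intros a b Ha Hb. specialize (HN a b Ha Hb).
    destruct j. destruct (Hs a) as [Ha0 _]; destruct (Hs b) as [Hb0 _]. rewrite Ha0, Hb0.
    rewrite Rminus_0_r, Rabs_R0. destruct eps; simpl; lra.
    pose proof (coef_bound (fun j => s a j - s b j) (S j) (exQ_diff _ _ (proj2 (Hs a)) (proj2 (Hs b))) ltac:(lia)).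
    simpl in H. destruct eps; simpl in *; lra. }
  set (z := fun j => real (Lim_seq (fun a => s a j))).
  assert (Hz : forall j, is_lim_seq (fun a => s a j) (z j)).
  { intros j. unfold z. destruct (Hcj j) as [l Hl]. rewrite (is_lim_seq_unique _ _ Hl). simpl. auto. }
  assert (Hconv : forall eps, 0 < eps -> exists N, forall k, (N <= k)%nat ->
      exQ (fun j => s k j - z j) /\ Nn (fun j => s k j - z j) <= eps).
  { intros eps Heps. destruct (HC eps Heps) as [N HN]. exists N. intros k Hk.
    assert (Hb : forall M, sum_n (fun j => (INR j * (s k j - z j)) ^ 2) M <= eps ^ 2).
    { intros M. pose proof (lim_sum s z (s k) M Hz) as HL.
      apply (is_lim_seq_incr_n _ N) in HL.
      assert (Hle : Rbar_le (sum_n (fun j => (INR j * (s k j - z j)) ^ 2) M) (eps ^ 2)).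
      { refine (is_lim_seq_le _ (fun _ => eps ^ 2) _ _ _ HL (is_lim_seq_const _)).
        intros a. specialize (HN k (a + N)%nat Hk ltac:(lia)).
        pose proof (exQ_diff _ _ (proj2 (Hs k)) (proj2 (Hs (a + N)%nat))) as E.
        eapply Rle_trans. apply (sum_le_Series _ M (fun n => pow2_ge_0 _) E).
        fold (Qs (fun j => s k j - s (a + N)%nat j)). rewrite <- (Nn_sq _ E).
        pose proof (Nn_nonneg (fun j => s k j - s (a + N)%nat j)). nra. }
      exact Hle. }
    destruct (bounded_series _ _ (fun n => pow2_ge_0 _) Hb) as [Hex HS].
    split; auto. unfold Nn. fold (Qs (fun j => s k j - z j)) in HS.
    rewrite <- (sqrt_pow2 eps) by lra. apply sqrt_le_1_alt. exact HS. }
  exists z. split.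
  - destruct (Hconv 1 ltac:(lra)) as [N HN]. destruct (HN N (le_n N)) as [E _].
    split.
    + unfold z. destruct (Hs 0%nat) as [_ _].
      rewrite (Lim_seq_ext _ (fun _ => 0)). rewrite Lim_seq_const. auto.
      intros a. destruct (Hs a); auto.
    + apply (exQ_ext (lin2 1 (s N) (-1) (fun j => s N j - z j))). intros; unfold lin2; ring.
      apply exQ_lin; auto. apply (Hs N).
  - intros eps Heps. destruct (Hconv eps Heps) as [N HN]. exists N. intros k Hk. apply HN; auto.
Qed.


Lemma Nn_sym a b : Nn (fun j => a j - b j) = Nn (fun j => b j - a j).
Proof. unfold Nn, Qs. f_equal. apply Series_ext. intros; ring. Qed.

Lemma Nn_lip a b : exQ a -> exQ b -> Nn a <= Nn b + Nn (fun j => a j - b j).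
Proof.
  intros Ha Hb. pose proof (Nn_tri b (fun j => a j - b j) Hb (exQ_diff _ _ Ha Hb)).
  unfold Nn at 1. rewrite (Qs_ext a (lin2 1 b 1 (fun j => a j - b j))). exact H.
  intros; unfold lin2; ring.
Qed.

Lemma K0_compact (q : R) (G : seqV -> R) (DG : seqV -> seqV -> R) (m : R) :
  1 < q -> C1_on inV G DG -> compact_dual_map inV DG -> is_m G q m -> 0 < m ->
  forall w : nat -> seqV, (forall k, inV (w k) /\ Vnorm (w k) = 1 /\ G (w k) = m) ->
  exists (phi : nat -> nat) z, (forall k, (phi k < phi (S k))%nat) /\
    inV z /\ Vnorm z = 1 /\ G z = m /\
    forall eps, 0 < eps -> exists N, forall k, (N <= k)%nat -> Nn (fun j => w (phi k) j - z j) <= eps.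
Proof.
  intros Hq [HF _] HK Hm Hm0 w Hw. pose proof PI_RGT_0 as HPI.
  destruct (HK w 1 (fun k => proj1 (Hw k)) (fun k => Req_le _ _ (proj1 (proj2 (Hw k))))) as [phi [l [Hphi [Hl Hconv]]]].
  set (s := fun k => w (phi k)).
  assert (Hs : forall k, inV (s k) /\ Vnorm (s k) = 1 /\ G (s k) = m) by (intros; apply Hw).
  assert (Hcauchy : forall eps, 0 < eps -> exists N, forall a b, (N <= a)%nat -> (N <= b)%nat ->
      Nn (fun j => s a j - s b j) <= eps).
  { intros eps Heps.
    set (e' := eps * ((q + 1) * m * PI) / 2).
    assert (He' : 0 < e') by (unfold e'; apply Rmult_lt_0_compat; [apply Rmult_lt_0_compat|]; try lra; apply Rmult_lt_0_compat; try lra; apply Rmult_lt_0_compat; lra).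
    destruct (Hconv e' He') as [N HN]. exists N. intros a b Ha Hb.
    destruct (Hs a) as [Hva [Hna Hga]]. destruct (Hs b) as [Hvb [Hnb Hgb]].
    set (d := fun j => s a j - s b j).
    assert (Hd : inV d).
    { split. unfold d. rewrite (proj1 Hva), (proj1 Hvb). ring. apply exQ_diff; [apply Hva | apply Hvb]. }
    pose proof (lagrange q G DG m Hq HF Hm Hm0 (s a) d Hva Hna Hga Hd) as La.
    pose proof (lagrange q G DG m Hq HF Hm Hm0 (s b) d Hvb Hnb Hgb Hd) as Lb.
    assert (EB : Bs (s a) d - Bs (s b) d = Nn d ^ 2).
    { rewrite (Nn_sq d (proj2 Hd)), <- Bs_diag.
      rewrite (Bs_ext d d (lin2 1 (s a) (-1) (s b)) d). rewrite Bs_lin; try apply Hva; try apply Hvb; try apply Hd. ring.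
      intros; unfold d, lin2; ring. intros; auto. }
    pose proof (HN a Ha d Hd) as Ca. pose proof (HN b Hb d Hd) as Cb.
    unfold s in Ca, Cb. fold (s a) in Ca. fold (s b) in Cb.
    rewrite La in Ca. rewrite Lb in Cb.
    rewrite (Vnorm_Nn d (proj2 Hd)) in Ca, Cb.
    assert (Hdd : (q + 1) * m * (PI ^ 2 * Nn d ^ 2) <= 2 * e' * (PI * Nn d)).
    { rewrite <- EB. apply Rabs_le_between in Ca. apply Rabs_le_between in Cb. nra. }
    pose proof (Nn_nonneg d).
    destruct (Req_dec (Nn d) 0) as [E|E]. fold d. lra.
    assert (0 < Nn d) by lra.
    assert (Hc : 0 < (q + 1) * m * PI) by (apply Rmult_lt_0_compat; [apply Rmult_lt_0_compat|]; lra).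
    assert (((q + 1) * m * PI) * Nn d <= 2 * e') .
    { apply (Rmult_le_reg_r (PI * Nn d)). apply Rmult_lt_0_compat; lra.
      replace ((q + 1) * m * PI * Nn d * (PI * Nn d)) with ((q + 1) * m * (PI ^ 2 * Nn d ^ 2)) by ring. lra. }
    unfold e' in H1. fold d.
    apply (Rmult_le_reg_l ((q + 1) * m * PI)); auto. lra. }
  destruct (complete_V s (fun k => proj1 (Hs k)) Hcauchy) as [z [Hz Hzc]].
  exists phi, z. split; auto. split; auto.
  assert (HNs : forall k, Nn (s k) = / PI).
  { intros k. destruct (Hs k) as [Hv [Hn _]]. rewrite Vnorm_Nn in Hn by apply Hv. field_simplify; [|lra].
    rewrite <- Hn. field. lra. }
  split.
  - rewrite Vnorm_Nn by apply Hz.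
    assert (forall eps, 0 < eps -> Rabs (Nn z - / PI) <= eps).
    { intros eps Heps. destruct (Hzc eps Heps) as [N HN]. specialize (HN N (le_n N)).
      pose proof (Nn_lip z (s N) (proj2 Hz) (proj2 (proj1 (Hs N)))).
      pose proof (Nn_lip (s N) z (proj2 (proj1 (Hs N))) (proj2 Hz)).
      rewrite Nn_sym in H. rewrite HNs in H, H0. apply Rabs_le. lra. }
    destruct (Req_dec (Nn z) (/ PI)) as [E|E]. rewrite E; field; lra.
    exfalso. assert (0 < Rabs (Nn z - / PI)) by (apply Rabs_pos_lt; lra).
    specialize (H (Rabs (Nn z - / PI) / 2) ltac:(lra)). lra.
  - split.
    + destruct (proj1 (HF z Hz)) as [_ [C HC]].
      destruct (proj2 (HF z Hz) 1 ltac:(lra)) as [d1 [Hd1 Hfr]].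
      assert (forall eps, 0 < eps -> Rabs (m - G z) <= eps).
      { intros eps Heps.
        set (eta := Rmin (d1 / (2 * PI)) (eps / ((1 + Rabs C) * PI))).
        assert (Heta : 0 < eta).
        { unfold eta. apply Rmin_pos. apply Rdiv_lt_0_compat; lra. apply Rdiv_lt_0_compat; auto.
          pose proof (Rabs_pos C). apply Rmult_lt_0_compat; lra. }
        destruct (Hzc eta Heta) as [N HN]. specialize (HN N (le_n N)).
        set (h := fun j => s N j - z j).
        assert (Hh : inV h).
        { split. unfold h. rewrite (proj1 (proj1 (Hs N))), (proj1 Hz). ring. apply exQ_diff; [apply (Hs N) | apply Hz]. }
        assert (HVh : Vnorm h = PI * Nn h) by (apply Vnorm_Nn, Hh).
        assert (Hzh : vadd z h = s N).
        { apply functional_extensionality; intros j; unfold vadd, h; ring. }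
        assert (Hlt : Vnorm h < d1).
        { rewrite HVh. assert (eta <= d1 / (2 * PI)) by apply Rmin_l.
          assert (HN2 : Nn h <= eta) by exact HN. assert (PI * Nn h <= PI * (d1 / (2 * PI))) by (apply Rmult_le_compat_l; lra).
          replace (PI * (d1 / (2 * PI))) with (d1 / 2) in H0 by (field; lra). lra. }
        assert (Hin : inV (vadd z h)) by (rewrite Hzh; apply (Hs N)).
        pose proof (Hfr h Hh Hlt Hin) as Hf. rewrite Hzh in Hf. destruct (Hs N) as [_ [_ HGs]]. rewrite HGs in Hf.
        specialize (HC h Hh).
        assert (HB1 : Rabs (m - G z) <= (1 + Rabs C) * Vnorm h).
        { pose proof (Rle_abs C) as Q1. pose proof (Vnorm_nonneg h) as Q2.
          assert (Q3 : Rabs (DG z h) <= Rabs C * Vnorm h).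
          { apply (Rle_trans _ (C * Vnorm h)). exact HC. apply Rmult_le_compat_r; auto. }
          apply Rabs_le_between in Hf. apply Rabs_le_between in Q3. apply Rabs_le. nra. }
        assert (HB2 : eta <= eps / ((1 + Rabs C) * PI)) by apply Rmin_r.
        assert (HN2 : Nn h <= eta) by exact HN.
        pose proof (Rabs_pos C) as HC0.
        assert (HB3 : (1 + Rabs C) * Vnorm h <= (1 + Rabs C) * (PI * (eps / ((1 + Rabs C) * PI)))).
        { rewrite HVh. apply Rmult_le_compat_l. lra. apply Rmult_le_compat_l; lra. }
        replace ((1 + Rabs C) * (PI * (eps / ((1 + Rabs C) * PI)))) with eps in HB3 by (field; lra). lra. }
      destruct (Req_dec (G z) m) as [E|E]; auto.
      exfalso. assert (0 < Rabs (m - G z)) by (apply Rabs_pos_lt; lra).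
      specialize (H (Rabs (m - G z) / 2) ltac:(lra)). lra.
    + exact Hzc.
Qed.


Section NearK0.
Variables (q : R) (G : seqV -> R) (DG : seqV -> seqV -> R) (m : R).
Hypotheses (Hq : 1 < q) (HC1 : C1_on inV G DG) (HK : compact_dual_map inV DG)
  (Hm : is_m G q m) (Hm0 : 0 < m)
  (HL : forall (n : nat) v, (2 <= n)%nat -> inV v -> 0 < G (Lop n v) ->
      G (Lop n v) < Rpower (INR n) (q + 1) * G v).

Definition Dn (z : seqV) (n : nat) := Series (fun j => if Nat.eqb (j mod n) 0 then 0 else (INR j * z j) ^ 2).

Lemma Dn_ex z n : exQ z -> ex_series (fun j => if Nat.eqb (j mod n) 0 then 0 else (INR j * z j) ^ 2).
Proof.
  intros Hz. apply (exs_le _ (fun j => (INR j * z j) ^ 2)); auto. intros j; cbv beta.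
  destruct (Nat.eqb (j mod n) 0). rewrite Rabs_R0; apply pow2_ge_0.
  rewrite Rabs_right. lra. apply Rle_ge, pow2_ge_0.
Qed.

Lemma Dn_term z n j : exQ z -> (j mod n <> 0)%nat -> (INR j * z j) ^ 2 <= Dn z n.
Proof.
  intros Hz Hj.
  assert (Hp : forall k, 0 <= (fun j => if Nat.eqb (j mod n) 0 then 0 else (INR j * z j) ^ 2) k)
    by (intros k; cbv beta; destruct (Nat.eqb (k mod n) 0); [lra| apply pow2_ge_0]).
  pose proof (term_le_Series _ j Hp (Dn_ex z n Hz)) as H.
  cbv beta in H. apply Nat.eqb_neq in Hj. rewrite Hj in H. exact H.
Qed.

Lemma Dn_le z n y : exQ z -> inV y -> (forall j, y j <> 0 -> (j mod n = 0)%nat) ->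
  Dn z n <= Qs (fun j => y j - z j).
Proof.
  intros Hz Hy Hs. apply Series_le. 2: apply exQ_diff; auto; apply Hy.
  intros j; cbv beta. destruct (Nat.eqb (j mod n) 0) eqn:E. split; [lra | apply pow2_ge_0].
  apply Nat.eqb_neq in E. assert (y j = 0) by (destruct (Req_dec (y j) 0); auto; exfalso; auto).
  rewrite H. split. apply pow2_ge_0. right; ring.
Qed.

Lemma Dn_pos z n : inV z -> Vnorm z = 1 -> G z = m -> (2 <= n)%nat -> 0 < Dn z n.
Proof.
  intros Hz Hn HG Hn2.
  assert (H0 : 0 <= Dn z n).
  { apply Series_nonneg. intros k; cbv beta; destruct (Nat.eqb (k mod n) 0); [lra| apply pow2_ge_0]. apply Dn_ex, Hz. }
  destruct H0 as [|E]; auto. exfalso.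
  apply (K0_not_Ln q G m Hq Hm Hm0 HL z n Hz Hn HG Hn2).
  intros j Hj. destruct (Nat.eq_dec (j mod n) 0); auto. exfalso.
  pose proof (Dn_term z n j (proj2 Hz) n0). rewrite <- E in H.
  destruct j. destruct Hz as [Hz0 _]. congruence.
  assert (0 < INR (S j)) by (apply lt_0_INR; lia).
  pose proof (pow2_ge_0 (INR (S j) * z (S j))). assert (INR (S j) * z (S j) = 0) by nra.
  apply Rmult_integral in H2. destruct H2; lra.
Qed.

Lemma dist_pos z : inV z -> Vnorm z = 1 -> G z = m ->
  exists delta, 0 < delta /\ forall n y, (2 <= n)%nat -> inV y -> (forall j, y j <> 0 -> (j mod n = 0)%nat) ->
    delta <= Nn (fun j => y j - z j).
Proof.
  intros Hz Hn HG.
  assert (Hj0 : exists j0, z j0 <> 0).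
  { apply NNPP. intros Hne. assert (forall j, z j = 0) by (intros j; apply NNPP; intros E; apply Hne; eauto).
    rewrite Vnorm_Qs in Hn. unfold Qs in Hn. rewrite (Series_ext _ (fun _ => 0 * 0)) in Hn by (intros; rewrite H; ring).
    rewrite Series_scal_l, Rmult_0_l, Rmult_0_r, sqrt_0 in Hn. lra. }
  destruct Hj0 as [j0 Hj0].
  assert (Hj01 : (1 <= j0)%nat). { destruct j0. destruct Hz as [Hz0 _]. congruence. lia. }
  set (t := (INR j0 * z j0) ^ 2).
  assert (Ht : 0 < t).
  { unfold t. assert (0 < INR j0) by (apply lt_0_INR; lia).
    assert (INR j0 * z j0 <> 0) by (intros E; apply Rmult_integral in E; destruct E; lra).
    pose proof (pow2_ge_0 (INR j0 * z j0)). destruct H1 as [|E]; auto. exfalso.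
    symmetry in E. apply H0. nra. }
  assert (Hfin : forall M, exists d, 0 < d /\ forall n, (2 <= n <= M)%nat -> d <= Dn z n).
  { induction M.
    - exists 1. split. lra. intros; lia.
    - destruct IHM as [d [Hd HdM]].
      destruct (Compare_dec.le_dec 2 (S M)) as [H2|H2].
      + exists (Rmin d (Dn z (S M))). split. apply Rmin_pos; auto. apply Dn_pos; auto.
        intros n Hnn. destruct (Nat.eq_dec n (S M)) as [->|Hne]. apply Rmin_r.
        eapply Rle_trans. apply Rmin_l. apply HdM. lia.
      + exists d. split; auto. intros; lia. }
  destruct (Hfin j0) as [d [Hd Hdn]].
  exists (sqrt (Rmin d t)). split. apply sqrt_lt_R0, Rmin_pos; auto.
  intros n y Hn2 Hy Hs.
  assert (HD : Rmin d t <= Dn z n).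
  { destruct (Compare_dec.le_dec n j0) as [Hle|Hgt].
    - eapply Rle_trans. apply Rmin_l. apply Hdn; lia.
    - eapply Rle_trans. apply Rmin_r. apply Dn_term. apply Hz. rewrite Nat.mod_small; lia. }
  unfold Nn. apply sqrt_le_1_alt. eapply Rle_trans. exact HD. apply Dn_le; auto. apply Hz.
Qed.

Lemma phi_ge (phi : nat -> nat) : (forall k, (phi k < phi (S k))%nat) -> forall k, (k <= phi k)%nat.
Proof. intros H k. induction k. lia. specialize (H k). lia. Qed.

Lemma near_K0 : exists eps, 0 < eps /\ forall y w n, inV y -> inV w -> Vnorm w = 1 -> G w = m ->
  Vnorm (vsub y w) < eps -> (2 <= n)%nat -> (forall j, y j <> 0 -> (j mod n = 0)%nat) -> False.
Proof.
  apply NNPP. intros Hne. pose proof PI_RGT_0 as HPI.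
  assert (Hex : forall k : nat, exists p : seqV * seqV * nat,
    inV (fst (fst p)) /\ inV (snd (fst p)) /\ Vnorm (snd (fst p)) = 1 /\ G (snd (fst p)) = m /\
    Vnorm (vsub (fst (fst p)) (snd (fst p))) < PI / (INR k + 1) /\ (2 <= snd p)%nat /\
    (forall j, fst (fst p) j <> 0 -> (j mod (snd p) = 0)%nat)).
  { intros k. apply NNPP. intros Hk. apply Hne. exists (PI / (INR k + 1)). split.
    apply Rdiv_lt_0_compat; auto. pose proof (pos_INR k); lra.
    intros y w n Hy Hw Hnw HGw Hd Hn Hs. apply Hk. exists (y, w, n). simpl. tauto. }
  set (f := fun k => proj1_sig (constructive_indefinite_description _ (Hex k))).
  assert (Hf : forall k, let p := f k in
    inV (fst (fst p)) /\ inV (snd (fst p)) /\ Vnorm (snd (fst p)) = 1 /\ G (snd (fst p)) = m /\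
    Vnorm (vsub (fst (fst p)) (snd (fst p))) < PI / (INR k + 1) /\ (2 <= snd p)%nat /\
    (forall j, fst (fst p) j <> 0 -> (j mod (snd p) = 0)%nat)).
  { intros k. unfold f. apply (proj2_sig (constructive_indefinite_description _ (Hex k))). }
  set (w := fun k => snd (fst (f k))). set (y := fun k => fst (fst (f k))). set (nn := fun k => snd (f k)).
  destruct (K0_compact q G DG m Hq HC1 HK Hm Hm0 w) as [phi [z [Hphi [Hz [Hnz [HGz Hconv]]]]]].
  { intros k. destruct (Hf k) as [_ [H1 [H2 [H3 _]]]]. unfold w. auto. }
  destruct (dist_pos z Hz Hnz HGz) as [delta [Hdelta Hdist]].
  destruct (Hconv (delta / 2) ltac:(lra)) as [N1 HN1].
  destruct (INR_archimed (delta / 2) 1 ltac:(lra)) as [n0 Hn0].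
  set (k := max N1 n0).
  destruct (Hf (phi k)) as [Hy [Hw [_ [_ [Hd [Hn Hs]]]]]].
  fold (y (phi k)) (w (phi k)) (nn (phi k)) in Hy, Hw, Hd, Hn, Hs.
  specialize (Hdist (nn (phi k)) (y (phi k)) Hn Hy Hs).
  specialize (HN1 k ltac:(unfold k; lia)).
  pose proof (Nn_tri3 (y (phi k)) (w (phi k)) z (proj2 Hy) (proj2 Hw) (proj2 Hz)) as Htri.
  assert (Hd2 : Nn (fun j => y (phi k) j - w (phi k) j) < / (INR (phi k) + 1)).
  { unfold vsub in Hd. rewrite Vnorm_Nn in Hd by (apply exQ_diff; [apply Hy | apply Hw]).
    assert (0 < INR (phi k) + 1) by (pose proof (pos_INR (phi k)); lra).
    apply (Rmult_lt_reg_l PI). lra. replace (PI * / (INR (phi k) + 1)) with (PI / (INR (phi k) + 1)) by (unfold Rdiv; ring). exact Hd. }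
  assert (Hk : / (INR (phi k) + 1) < delta / 2).
  { assert (Hle : (n0 <= phi k)%nat) by (pose proof (phi_ge phi Hphi k); unfold k in *; lia).
    apply le_INR in Hle. pose proof (pos_INR n0).
    assert (0 < INR (phi k) + 1) by lra.
    apply (Rmult_lt_reg_l (INR (phi k) + 1)); auto. rewrite Rinv_r by lra. nra. }
  lra.
Qed.

End NearK0.


Theorem lemma4p3 :
  forall (q : R) (G : seqV -> R) (DG : seqV -> seqV -> R) (m : R),
  1 < q ->
  C1_on inV G DG -> compact_dual_map inV DG ->
  (forall v lam, inV v -> 0 < lam -> G (vscal lam v) = Rpower lam (q + 1) * G v) ->
  is_m G q m -> 0 < m ->
  (forall (n : nat) v, (2 <= n)%nat -> inV v -> 0 < G (Lop n v) ->
      G (Lop n v) < Rpower (INR n) (q + 1) * G v) ->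
  forall C0 : R, 0 < C0 ->
  forall h : R -> R,
  (forall eps, 0 < eps -> exists delta, 0 < delta /\
      forall s, 0 <= s < delta -> Rabs (h s) < eps) ->
  exists C9 : R, 0 < C9 /\ C9 <= C0 /\
  forall (mu r0 alpha : R) (Rf : seqV -> R) (DR : seqV -> seqV -> R) (v : seqV),
    0 < mu -> 0 < r0 -> 0 < alpha ->
    C1_on (Vball r0) Rf DR -> compact_dual_map (Vball r0) DR ->
    Rf vzero = 0 ->
    (forall w, Vball r0 w -> Rabs (DR w w) <= alpha * powr (Vnorm w) (q + 1)) ->
    alpha / m <= C9 ->
    Rpower (mu / m) (1 / (q - 1)) <= C0 * r0 ->
    Vball r0 v ->
    (forall u, inV u -> mu * Vinner v u - DG v u + DR v u = 0) ->
    (exists y, inV y /\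
       v = vscal (Rpower (mu / (m * (q + 1))) (1 / (q - 1))) y /\
       dist_le y (K0 G m) (h (alpha / m))) ->
    minimal_period_2pi v.
Proof.
  intros q G DG m Hq HC1 HK Hhom Hm Hm0 HL C0 HC0 h Hh.
  destruct (near_K0 q G DG m Hq HC1 HK Hm Hm0 HL) as [eps [Heps Hnear]].
  destruct (Hh (eps / 2) ltac:(lra)) as [dh [Hdh Hhd]].
  exists (Rmin C0 (dh / 2)). split. apply Rmin_pos; lra. split. apply Rmin_l.
  intros mu r0 alpha Rf DR v Hmu Hr0 Hal _ _ _ _ HC9 _ [Hv _] _ [y [Hy [Hvy Hdist]]].
  assert (Hs : 0 <= alpha / m < dh).
  { split. apply Rlt_le, Rdiv_lt_0_compat; auto. pose proof (Rmin_r C0 (dh / 2)). lra. }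
  specialize (Hhd _ Hs). apply Rabs_lt_between in Hhd.
  destruct (Hdist (eps / 2) ltac:(lra)) as [w [[Hw [Hnw HGw]] Hyw]].
  assert (Hyw' : Vnorm (vsub y w) < eps) by lra.
  set (c := Rpower (mu / (m * (q + 1))) (1 / (q - 1))) in Hvy.
  assert (Hc : 0 < c) by (unfold c, Rpower; apply exp_pos).
  split.
  - intros t x _. unfold vfun. apply Series_ext. intros j.
    replace (INR j * (t + 2 * PI)) with (INR j * t + 2 * INR j * PI) by ring.
    rewrite cos_period. auto.
  - intros T HT Hper. destruct (Rle_dec (2 * PI) T) as [|HT2]; auto. exfalso.
    destruct (period_support v T Hv ltac:(lra) Hper) as [n [Hn Hsupp]].
    apply (Hnear y w n Hy Hw Hnw HGw Hyw' Hn).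
    intros j Hj. apply Hsupp. rewrite Hvy. unfold vscal. intros E.
    apply Rmult_integral in E. destruct E; lra.
Qed.
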